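(* Let $d$ be a sufficiently large integer and let $X,Y\subset\mathbb{R}^d$ be finite sets with $|Y|=C|X|$, where $C\leq\log|X|$, and such that the affine hull of $X+Y=\{x+y:x\in X,y\in Y\}$ has dimension $d$. Define $K$ by $|X|+|Y|=K(d+2)$. If $K\leq\log|X|$, then $$|X+Y|\geq\frac{|X||Y|}{2^{10}\log^2|X|}.$$ *)

(* Defs.v *)
(* vectors in R^d are row vectors 'rV[R]_d over R : realType;
   finite sets are finmap's {fset _}; log is MathComp-Analysis' natural log ln. *)
From HB Require Import structures.
From mathcomp Require Import all_boot all_order all_algebra.
From mathcomp Require Import finmap.
From mathcomp Require Import reals exp.
Set Implicit Arguments. Unset Strict Implicit. Unset Printing Implicit Defensive.
Import Order.TTheory GRing.Theory Num.Theory.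
Local Open Scope ring_scope.
Local Open Scope fset_scope.

Definition sumset (R : realType) (d : nat) (X Y : {fset 'rV[R]_d}) : {fset 'rV[R]_d} :=
  [fset ((x : 'rV[R]_d) + y)%R | x in X, y in Y].

(* S has full affine dimension d: S is nonempty and, for some (any) x0 in S,
   the differences v - x0 (v in S) span R^d, i.e. the affine hull of S is R^d. *)
Definition full_affine_dim (R : realType) (d : nat) (S : {fset 'rV[R]_d}) : Prop :=
  exists2 x0, x0 \in S &
    \dim (<< [seq v - x0 | v <- (S : seq _)] >>)%VS = d.

(* Main.v *)
Require Import Defs.
From HB Require Import structures.
From mathcomp Require Import all_boot all_order all_algebra.
From mathcomp Require Import finmap.
From mathcomp Require Import reals exp zify ring lra.
Import Order.TTheory GRing.Theory Num.Theory.
Local Open Scope ring_scope.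
Local Open Scope fset_scope.

Lemma core (R : realType) d (Xs Ys : seq 'rV[R]_d) (S : {fset 'rV[R]_d}) x1 y0 :
  uniq Xs -> x1 \in Xs -> y0 \in Ys ->
  (forall x y, x \in Xs -> y \in Ys -> (x + y)%R \in S) ->
  leq (muln (size Xs) (subn (\dim (<<[seq x - x1 | x <- Xs]>> + <<[seq y - y0 | y <- Ys]>>)%VS)
     (\dim <<[seq x - x1 | x <- Xs]>>%VS))) #|` S|.
Proof.
move=> uX x1X y0Y hS.
set V1 := (<<[seq x - x1 | x <- Xs]>>)%VS.
set W := (<<[seq y - y0 | y <- Ys]>>)%VS.
pose f : 'End('rV[R]_d) := (\1 - projv V1)%VF.
have fE w : f w = w - projv V1 w by rewrite /f add_lfunE opp_lfunE id_lfunE.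
have kerf w : (f w == 0) = (w \in V1).
  rewrite fE subr_eq0; apply/eqP/idP => [->|wV]; first exact: memv_proj.
  by rewrite projv_id.
have lkerf : lker f = V1 by apply/vspaceP => w; rewrite memv_ker kerf.
pose r y := head 0 [seq z <- Ys | f z == f y].
have ry y : y \in Ys -> r y \in Ys /\ f (r y) = f y.
  move=> yY; rewrite /r.
  have : y \in [seq z <- Ys | f z == f y] by rewrite mem_filter eqxx yY.
  case E: [seq z <- Ys | f z == f y] => [|a s] //= _.
  have : a \in [seq z <- Ys | f z == f y] by rewrite E mem_head.
  by rewrite mem_filter => /andP[/eqP -> ->].
pose Ys' := undup (map r Ys).
have step3 : (size Xs * size Ys' <= #|` S|)%N.
  rewrite -(size_allpairs (fun x z => (x + z)%R)).
  apply: uniq_leq_size.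
    apply: allpairs_uniq => //; first exact: undup_uniq.
    move=> [x z] [x' z'] /allpairsP[[a b] [/= aX bY [-> ->]]]
       /allpairsP[[a' b'] [/= aX' bY' [-> ->]]] /= E.
    move: bY bY' E; rewrite !mem_undup => /mapP[y yY ->] /mapP[y' yY' ->] E.
    have Hv : r y - r y' \in V1.
      have -> : r y - r y' = (a' - x1) - (a - x1).
        have E' : r y = a' + r y' - a by rewrite -E (addrC a) addrK.
        by rewrite opprB addrA subrK E' addrAC addrK.
      by apply: memvB; apply: memv_span; apply: map_f.
    have Hf : f (r y) = f (r y').
      by apply/eqP; rewrite -subr_eq0 -linearB /= kerf.
    have Ery : r y = r y'.
      have := ry _ yY; have := ry _ yY'; move=> [_ h1] [_ h2].
      by rewrite /r -h2 Hf h1.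
    by rewrite Ery in E *; move/addIr: E => ->.
  move=> v /allpairsP[[a b] [/= aX bY ->]].
  move: bY; rewrite mem_undup => /mapP[y yY ->].
  by apply: hS => //; case: (ry _ yY).
have step2 : (\dim (f @: W) <= size Ys')%N.
  rewrite limg_span.
  apply: (leq_trans (dimvS (_ : _ <= <<[seq f z - f y0 | z <- Ys']>>)%VS)).
    apply/span_subvP => v /mapP[w /mapP[y yY ->] ->].
    rewrite linearB /=; have [_ <-] := ry _ yY.
    by apply: memv_span; apply: map_f; rewrite mem_undup map_f.
  by rewrite (leq_trans (dim_span _)) // size_map.
have step1 : (\dim (V1 + W) - \dim V1 <= \dim (f @: W))%N.
  have := limg_ker_dim f (V1 + W).
  rewrite lkerf (capv_idPr (addvSl _ _)) limgD.
  have : (f @: V1 == 0)%VS by rewrite -lkerE lkerf subvv.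
  move/eqP ->; rewrite add0v => <-; by rewrite addKn.
apply: leq_trans step3; rewrite leq_mul2l; apply/orP; right.
exact: leq_trans step1 step2.
Qed.

Theorem lemma17 (R : realType) :
  exists d0 : nat, forall (d : nat), (d0 <= d)%N ->
  forall X Y : {fset 'rV[R]_d},
    full_affine_dim (sumset X Y) ->
    (* C := |Y|/|X| <= log |X| *)
    (#|` Y|%:R <= ln (#|` X|%:R) * #|` X|%:R :> R) ->
    (* K := (|X|+|Y|)/(d+2) <= log |X| *)
    ((#|` X| + #|` Y|)%:R <= ln (#|` X|%:R) * (d + 2)%:R :> R) ->
    #|` sumset X Y|%:R >=
      (#|` X| * #|` Y|)%:R / (2 ^+ 10 * (ln (#|` X|%:R : R)) ^+ 2) :> R.
Proof.
exists 10%N => d d10 X Y [z0 hz hd] hC hK.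
have memS x y : x \in X -> y \in Y -> (x + y)%R \in sumset X Y.
  by move=> xX yY; rewrite /sumset; apply/imfset2P; exists x => //; exists y.
have [x0 x0X [y0 y0Y ez0]] :
    exists2 x, x \in X & exists2 y, y \in Y & z0 = (x + y)%R.
  by move: hz; rewrite /sumset => /imfset2P[x xX [y yY ->]]; exists x => //; exists y.
set V := <<[seq x - x0 | x <- (X : seq _)]>>%VS.
set W := <<[seq y - y0 | y <- (Y : seq _)]>>%VS.
have hdim : (d <= \dim (V + W))%N.
  rewrite -{1}hd; apply: dimvS; apply/span_subvP => v /mapP[s sS ->].
  move: sS => /imfset2P[x xX [y yY ->]]; rewrite ez0 opprD addrACA.
  by apply: memv_add; apply: memv_span; apply: map_f.
have dimd (U : {vspace 'rV[R]_d}) : (\dim U <= d)%N.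
  by rewrite (leq_trans (dimvS (subvf U))) // dimvf dim_matrix mul1r.
have ha : (\dim V <= #|` X|)%N by rewrite (leq_trans (dim_span _)) // size_map.
have hb : (\dim W <= #|` Y|)%N by rewrite (leq_trans (dim_span _)) // size_map.
have c1 := @core R d X Y (sumset X Y) x0 y0 (fset_uniq X) x0X y0Y memS.
have c2 := @core R d Y X (sumset X Y) y0 x0 (fset_uniq Y) y0Y x0X
  (fun y x yY xX => ltac:(rewrite addrC; exact: memS)).
rewrite -/V -/W in c1; rewrite -/V -/W addvC in c2.
set n := #|` X| in ha c1 hC hK *; set m := #|` Y| in hb c2 hC hK *.
set s := #|` sumset X Y| in c1 c2 *.
have da := dimd V; have db := dimd W; have dvw := dimd (V + W)%VS.
set a := \dim V in ha c1 c2 da; set b := \dim W in hb c1 c2 db.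
set D := \dim (V + W) in hdim c1 c2 dvw.
have key : [\/ (n * d <= 2 * s)%N, (m * d <= 2 * s)%N | (d * d <= 16 * s + 2 * d)%N].
  case: (leqP (2 * a) d) => h2a; first by apply: Or31; nia.
  case: (leqP (2 * b) d) => h2b; first by apply: Or32; nia.
  apply: Or33.
  pose t := b./2.
  have tn : (t <= n)%N by rewrite /t; lia.
  have t1 : (0 < t)%N by rewrite /t; lia.
  have x1in : nth 0 (take t X) 0 \in take t X.
    by apply: mem_nth; rewrite size_take -/n; case: ifP => _; lia.
  have c3 := @core R d (take t X) Y (sumset X Y) _ y0 (take_uniq t (fset_uniq X)) x1in y0Y
    (fun x y xX yY => memS x y (mem_take xX) yY).
  set V1 := (<<[seq ((x : 'rV[R]_d) - nth 0 (take t X) 0)%R | x <- take t X]>>)%VS in c3.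
  have h1 : (\dim V1 <= t)%N.
    rewrite (leq_trans (dim_span _)) // size_map size_take -/n; case: ifP => h; lia.
  have h2 : (b <= \dim (V1 + W))%N by apply: dimvS; apply: addvSr.
  rewrite size_take in c3.
  have st : (size (take t X) = t) by rewrite size_take -/n; case: ifP => h //; lia.
  rewrite size_take in st; rewrite st in c3.
  rewrite -/W -/s in c3.
  have : (t * (b - t) <= s)%N by apply: leq_trans c3; apply: leq_mul => //; lia.
  rewrite /t; nia.
have m1 : (0 < m)%N by rewrite /m -has_predT; apply/hasP; exists y0.
set L := ln (n%:R : R) in hC hK *.
rewrite !natrD in hK.
have n0 : ((0 : R) <= n%:R)%R by [].
have m1R : ((1 : R) <= m%:R)%R by rewrite ler1n.
have Lpos : (0 < L)%R by nra.
have n1 : ((1 : R) < n%:R)%R.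
  rewrite ltNge; apply/negP => /ln_le0; rewrite -/L; lra.
have n2 : ((2 : R) <= n%:R)%R by rewrite ler_nat; rewrite ltr1n in n1.
have Lh : (1 / 2 <= L)%R.
  have e := expR_ge1Dx (- L).
  rewrite expRN /L lnK ?posrE ?(lt_trans ltr01 n1) // -/L in e.
  have iv : ((n%:R : R)^-1 * n%:R = 1)%R by rewrite mulVf // gt_eqF // (lt_trans ltr01 n1).
  have : (0 <= (n%:R : R)^-1)%R by rewrite invr_ge0.
  nra.
have d10R : ((10 : R) <= d%:R)%R by rewrite ler_nat.
have -> : (2 : R) ^+ 10 = 1024.
  by rewrite !exprS expr0; ring.
rewrite ler_pdivrMr; last by apply: mulr_gt0 => //; apply: exprn_gt0.
have s0 : ((0 : R) <= s%:R)%R by [].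
rewrite natrM.
case: key => hk.
- have hA : ((n%:R : R) * d%:R <= 2 * s%:R)%R by rewrite -natrM -(natrM _ 2) ler_nat.
  have P1 : ((n%:R : R) * m%:R <= n%:R * (L * (d%:R + 2)))%R.
    by apply: ler_wpM2l => //; lra.
  set q := L * n%:R.
  have q0 : (0 <= q)%R by rewrite /q mulr_ge0 // ltW.
  have P2 : (q * d%:R <= 2 * (L * s%:R))%R by rewrite /q -mulrA; nra.
  have w0 : (0 <= L * s%:R)%R by rewrite mulr_ge0 // ltW.
  have P1' : ((n%:R : R) * m%:R <= q * d%:R + 2 * q)%R by rewrite /q; lra.
  set w := L * s%:R in P2 w0.
  have : (q * d%:R + 2 * q <= 1024 * L * w)%R by nra.
  rewrite /w; lra.
- have hA : ((m%:R : R) * d%:R <= 2 * s%:R)%R by rewrite -natrM -(natrM _ 2) ler_nat.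
  have P1 : ((n%:R : R) * m%:R <= m%:R * (L * (d%:R + 2)))%R.
    by rewrite mulrC; apply: ler_wpM2l => //; lra.
  set q := L * m%:R.
  have q0 : (0 <= q)%R by rewrite /q mulr_ge0 // ltW.
  have P2 : (q * d%:R <= 2 * (L * s%:R))%R by rewrite /q -mulrA; nra.
  have w0 : (0 <= L * s%:R)%R by rewrite mulr_ge0 // ltW.
  have P1' : ((n%:R : R) * m%:R <= q * d%:R + 2 * q)%R by rewrite /q; lra.
  set w := L * s%:R in P2 w0.
  have : (q * d%:R + 2 * q <= 1024 * L * w)%R by nra.
  rewrite /w; lra.
- have hC' : ((d%:R : R) * d%:R <= 16 * s%:R + 2 * d%:R)%R.
    by rewrite -natrM -(natrM _ 16) -(natrM _ 2) -natrD ler_nat.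
  have Q1 : (4 * ((n%:R : R) * m%:R) <= (n%:R + m%:R) ^+ 2)%R by have := sqr_ge0 ((n%:R : R) - m%:R); rewrite !expr2; nra.
  have Q2 : ((n%:R + m%:R : R) ^+ 2 <= (L * (d%:R + 2)) ^+ 2)%R.
    by rewrite ler_pXn2r // ?nnegrE //; nra.
  have L20 : (0 <= L ^+ 2)%R by rewrite exprn_ge0 // ltW.
  have Q3 : (L ^+ 2 * (d%:R + 2) ^+ 2 <= L ^+ 2 * (256 * (d%:R * d%:R - 2 * d%:R)))%R.
    by apply: ler_wpM2l => //; nra.
  have Q4 : (L ^+ 2 * (256 * (d%:R * d%:R - 2 * d%:R)) <= L ^+ 2 * (4096 * s%:R))%R.
    by apply: ler_wpM2l => //; nra.
  rewrite exprMn in Q2.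
  nra.
Qed.
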